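(* Let $R$ be a ring and let $n\geq 2$ be a fixed integer. If $x^n-x$ is nilpotent for every $x\in R$, then $R$ is D-regularly nil clean.
   Context: All rings are associative with identity $1\neq 0$. A ring $R$ is called D-regularly nil clean if for each $a\in R$ there exists an idempotent $e\in aRa$ such that $a(1-e)$ is nilpotent. *)

(* Defs.v *)
From mathcomp Require Import all_boot all_algebra.
Set Implicit Arguments. Unset Strict Implicit. Unset Printing Implicit Defensive.
Import GRing.Theory.
Local Open Scope ring_scope.

Definition nilpotent_elt (R : nzRingType) (x : R) : Prop :=
  exists k : nat, x ^+ k = 0.

Definition idempotent_elt (R : nzRingType) (e : R) : Prop := e * e = e.

Definition D_regularly_nil_clean (R : nzRingType) : Prop :=
  forall a : R, exists e : R,
    (exists r : R, e = a * r * a) /\ idempotent_elt e /\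
    nilpotent_elt (a * (1 - e)).

(* Main.v *)
Require Import Defs.
From mathcomp Require Import all_boot all_algebra.
From mathcomp Require Import ring zify.
Local Open Scope ring_scope.
Import GRing.Theory.

Lemma split_one (S : comNzRingType) (s t : S) (hst : s + t = 1) (k : nat) :
  exists p q : S, 1 = s ^+ (2 ^ k) * p + t ^+ (2 ^ k) * q.
Proof.
elim: k => [|k [p [q IH]]].
  by exists 1, 1; rewrite expn0 !expr1 !mulr1 hst.
set K := (2 ^ k)%N in IH *.
have -> : (2 ^ k.+1 = K + K)%N by rewrite expnS /K; lia.
set A := s ^+ K * p; set B := t ^+ K * q.
exists (p ^+ 2 * (A + 3%:R * B)), (q ^+ 2 * (3%:R * A + B)).
rewrite !exprD.
transitivity ((A + B) ^+ 3); first by rewrite -IH expr1n.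
rewrite /A /B; ring.
Qed.

Theorem corollary2p8 (R : nzRingType) (n : nat) (hn : (2 <= n)%N)
  (H : forall x : R, nilpotent_elt (x ^+ n - x)) :
  D_regularly_nil_clean R.
Proof.
move=> a.
have [m Hm] := H a.
pose cfu : commr_rmorph (intr : int -> R) a := fun x => commr_int a x.
pose phi : {rmorphism {poly int} -> R} := horner_morph cfu.
have phiX : phi 'X = a by apply: horner_morphX.
pose X : {poly int} := 'X.
pose U := X ^+ n.-1.
pose T := 1 - U.
have XT : X * T = - (X ^+ n - X).
  rewrite /T /U mulrBr mulr1 -exprS prednK; last by lia.
  by rewrite opprB.
have phiXTm : phi ((X * T) ^+ m) = 0.
  by rewrite XT rmorphXn /= rmorphN rmorphB rmorphXn /= phiX exprNn Hm mulr0.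
have UT : U + T = 1 by rewrite /T addrC subrK.
have [p [q Hpq]] := @split_one _ U T UT (m + 2).
set K := (2 ^ (m + 2))%N in Hpq.
have Km : (m + 2 <= K)%N by rewrite /K; apply: ltnW; apply: ltn_expl.
have UK : U ^+ K = X ^+ ((n.-1 * K - m) + m) by rewrite -exprM subnK //; nia.
have TK : T ^+ K = T ^+ ((K - m) + m) by rewrite subnK //; lia.
have EF : U ^+ K * p * (T ^+ K * q) =
    (X * T) ^+ m * (X ^+ (n.-1 * K - m) * T ^+ (K - m) * p * q).
  by rewrite UK TK !exprD exprMn; ring.
have F1 : T ^+ K * q = 1 - U ^+ K * p by rewrite {1}Hpq; ring.
exists (phi (U ^+ K * p)); split; [|split].
- have -> : U ^+ K * p = X * (X ^+ (n.-1 * K - 2) * p) * X.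
    rewrite /U -exprM.
    have E2 : (n.-1 * K = (n.-1 * K - 2).+2)%N by nia.
    rewrite {1}E2 !exprS; ring.
  by exists (phi (X ^+ (n.-1 * K - 2) * p)); rewrite !rmorphM /= phiX.
- rewrite /idempotent_elt -rmorphM; apply/eqP; rewrite -subr_eq0 -rmorphB.
  have -> : U ^+ K * p * (U ^+ K * p) - U ^+ K * p = - (U ^+ K * p * (T ^+ K * q)).
    rewrite F1; ring.
  by rewrite EF rmorphN rmorphM phiXTm mul0r oppr0.
- exists m.
  rewrite -phiX -(rmorph1 phi) -rmorphB -rmorphM -rmorphXn -F1.
  have K1 : (K = (K.-1).+1)%N by lia.
  rewrite K1 exprS (_ : X * (T * T ^+ K.-1 * q) = (X * T) * (T ^+ K.-1 * q)); last by ring.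
  by rewrite exprMn rmorphM phiXTm mul0r.
Qed.
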